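(* Let $0<e_0\le1$. For the problem $P_m, e_{i,k}\ge e_0\mid\mid C_{\max}$, every list schedule (LS) satisfies $\frac{C_{\max}(LS)}{C^*_{\max}}\le 1+\frac{1}{e_0}$, where $C^*_{\max}$ is the optimal makespan.
   Context: Shared-processing parallel machine scheduling: $m$ identical machines $M_1,\dots,M_m$, $n$ primary jobs available at time $0$ with processing times $p_j>0$, each processed without interruption on one machine, jobs on a machine processed one after another. The time axis of machine $M_i$ is partitioned into consecutive intervals $(0,t_{i,1}],(t_{i,1},t_{i,2}],\dots$ with sharing ratios $e_{i,k}\in(0,1]$; during the $k$-th interval $M_i$ processes primary work at rate $e_{i,k}$. In $P_m, e_{i,k}\ge e_0\mid\mid C_{\max}$ all sharing ratios satisfy $e_{i,k}\ge e_0$ and the objective is the makespan $C_{\max}=\max_j C_j$. List Scheduling (LS): given an arbitrary ordered list of the jobs, the jobs are scheduled one by one in list order, each assigned to a machine that becomes available (finishes its currently assigned jobs) earliest, starting at that time. *)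

(* Defs.v *)
From HB Require Import structures.
From mathcomp Require Import all_boot all_order all_algebra.
Set Implicit Arguments. Unset Strict Implicit. Unset Printing Implicit Defensive.
Import Order.TTheory GRing.Theory Num.Theory.
Local Open Scope ring_scope.

Section Defs.
Variable R : realFieldType.

Definition overlap (a b c d : R) : R :=
  Num.max 0 (Num.min b d - Num.max a c).

(* A sharing-ratio profile of one machine: breakpoints t 0 = 0 < t 1 < t 2 < ...
   (unbounded), the k-th interval is (t k, t k.+1] and has sharing ratio e k,
   with e0 <= e k <= 1. *)
Definition valid_profile (e0 : R) (t : nat -> R) (e : nat -> R) : Prop :=
  [/\ t 0%N = 0,
      (forall k, t k < t k.+1),
      (forall x : R, exists k, x <= t k) &
      (forall k, e0 <= e k <= 1)].

(* [work_on t e a b w]: the amount of primary work the machine with profile (t,e)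
   processes during (a,b] is w, i.e. w = \int_a^b rate, computed as the finite sum
   over all intervals (t k, t k.+1] (with k < N, where t N >= b, so all further
   terms vanish). *)
Definition work_on (t e : nat -> R) (a b w : R) : Prop :=
  exists N : nat, b <= t N /\
    w = \sum_(k < N) e k * overlap a b (t k) (t k.+1).

(* A (non-preemptive) schedule: job j is processed on machine [asg j],
   starting at [S j] and completing at [C j]. *)
Definition feasible (m n : nat) (t e : 'I_m -> nat -> R) (p : 'I_n -> R)
    (asg : 'I_n -> 'I_m) (S C : 'I_n -> R) : Prop :=
  (forall j, 0 <= S j /\ S j <= C j /\ work_on (t (asg j)) (e (asg j)) (S j) (C j) (p j))
  /\ (forall j j', j != j' -> asg j = asg j' -> C j <= S j' \/ C j' <= S j).

Definition makespan (n : nat) (C : 'I_n -> R) : R := \big[Num.max/0]_(j < n) C j.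

Definition avail (m n : nat) (asg : 'I_n -> 'I_m) (C : 'I_n -> R)
    (s : seq 'I_n) (i : 'I_m) : R :=
  \big[Num.max/0]_(j' <- s | asg j' == i) C j'.

(* (asg,S,C) is a schedule produced by List Scheduling with list L
   (any tie-breaking): jobs are taken in list order, each assigned to a machine
   that becomes available earliest given the previously scheduled jobs, starting
   at that time, and processed without interruption until p j units of work are
   done. *)
Definition list_schedule (m n : nat) (t e : 'I_m -> nat -> R) (p : 'I_n -> R)
    (L : seq 'I_n) (asg : 'I_n -> 'I_m) (S C : 'I_n -> R) : Prop :=
  perm_eq L (enum 'I_n) /\
  forall j : 'I_n,
    let prev := take (index j L) L in
    [/\ (forall i : 'I_m, avail asg C prev (asg j) <= avail asg C prev i),
        S j = avail asg C prev (asg j),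
        S j <= C j &
        work_on (t (asg j)) (e (asg j)) (S j) (C j) (p j)].

End Defs.

(* Main.v *)
Require Import Defs.
From HB Require Import structures.
From mathcomp Require Import all_boot all_order all_algebra.
From mathcomp Require Import lra.
Import Order.TTheory GRing.Theory Num.Theory.
Local Open Scope ring_scope.

Lemma ltf (R : realFieldType) (x y : R) : ~~ (x <= y) -> y < x.
Proof. by rewrite -ltNge. Qed.

Ltac split_if := match goal with |- context [if ?c then _ else _] =>
  lazymatch c with context [if _ then _ else _] => fail | _ =>
   let H := fresh in case: (boolP c) => H; try move/ltf: H => H end end.

Ltac ovc :=
  rewrite /overlap ?maxEle ?minEle; repeat (split_if; rewrite /=); lra.

Lemma ov_ge0 (R : realFieldType) (a b c d : R) : 0 <= overlap a b c d.
Proof. by rewrite /overlap le_max lexx. Qed.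

Lemma ov_split_r (R : realFieldType) (a b x y z : R) : x <= y -> y <= z ->
  overlap a b x y + overlap a b y z = overlap a b x z.
Proof. move=> *; ovc. Qed.

Lemma ov_split_l (R : realFieldType) (a b c x y : R) : a <= b -> b <= c ->
  overlap a b x y + overlap b c x y = overlap a c x y.
Proof. move=> *; ovc. Qed.

Lemma ov_in (R : realFieldType) (a b c d : R) : c <= a -> a <= b -> b <= d ->
  overlap a b c d = b - a.
Proof. move=> *; ovc. Qed.

Lemma ov_zero (R : realFieldType) (a b c d : R) : b <= c -> overlap a b c d = 0.
Proof. move=> *; ovc. Qed.

Lemma ov_empty (R : realFieldType) (a c d : R) : overlap a a c d = 0.
Proof. ovc. Qed.

Lemma ov_degen (R : realFieldType) (a b c : R) : overlap a b c c = 0.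
Proof. ovc. Qed.

Set Implicit Arguments. Unset Strict Implicit.

Definition Wn (R : realFieldType) (t e : nat -> R) (N : nat) (a b : R) :=
  \sum_(k < N) e k * overlap a b (t k) (t k.+1).

Lemma t_mono (R : realFieldType) (t : nat -> R) :
  (forall k, t k < t k.+1) -> forall k l, (k <= l)%N -> t k <= t l.
Proof.
move=> ht k l /subnKC <-; elim: (l - k)%N => [|d IH]; first by rewrite addn0.
by rewrite addnS (le_trans IH) // ltW.
Qed.

Section W.
Lemma Wn_add (R : realFieldType) (t e : nat -> R) (N : nat) (a b c : R) :
  (forall k, t k < t k.+1) -> a <= b -> b <= c ->
  Wn t e N a b + Wn t e N b c = Wn t e N a c.
Proof.
move=> ht hab hbc; rewrite /Wn -big_split /=; apply: eq_bigr => k _.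
by rewrite -mulrDr ov_split_l.
Qed.

Lemma Wn_ge0 (R : realFieldType) (e0 : R) (t e : nat -> R) (N : nat) (a b : R) :
  0 <= e0 -> (forall k, e0 <= e k <= 1) -> 0 <= Wn t e N a b.
Proof.
move=> h0 he; apply: sumr_ge0 => k _; apply: mulr_ge0; last exact: ov_ge0.
by case/andP: (he k) => h _; apply: le_trans h.
Qed.

Lemma Wn_mono (R : realFieldType) (e0 : R) (t e : nat -> R) (N : nat) (a b c : R) :
  0 <= e0 -> (forall k, e0 <= e k <= 1) -> (forall k, t k < t k.+1) ->
  a <= b -> b <= c -> Wn t e N a b <= Wn t e N a c.
Proof.
move=> h0 he ht hab hbc; rewrite -(Wn_add e N ht hab hbc) lerDl.
exact: Wn_ge0 he.
Qed.

Lemma ov_sum (R : realFieldType) (t : nat -> R) (N : nat) (a b : R) :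
  (forall k, t k < t k.+1) ->
  \sum_(k < N) overlap a b (t k) (t k.+1) = overlap a b (t 0%N) (t N).
Proof.
move=> ht; elim: N => [|N IH].
  by rewrite big_ord0 ov_degen.
rewrite big_ord_recr /= IH ov_split_r //.
  by apply: t_mono.
exact: ltW.
Qed.
End W.

Lemma Wn_le (R : realFieldType) (e0 : R) (t e : nat -> R) (N : nat) (a b : R) :
  valid_profile e0 t e -> 0 <= a -> a <= b -> b <= t N ->
  Wn t e N a b <= b - a.
Proof.
case=> t0 ht _ he ha hab hb.
rewrite -(@ov_in _ a b (t 0%N) (t N)) ?t0 // -t0 -ov_sum //.
apply: ler_sum => k _; rewrite -[X in _ <= X]mul1r ler_wpM2r ?ov_ge0 //.
by case/andP: (he k).
Qed.

Lemma Wn_ge (R : realFieldType) (e0 : R) (t e : nat -> R) (N : nat) (a b : R) :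
  valid_profile e0 t e -> 0 <= a -> a <= b -> b <= t N ->
  e0 * (b - a) <= Wn t e N a b.
Proof.
case=> t0 ht _ he ha hab hb.
rewrite -(@ov_in _ a b (t 0%N) (t N)) ?t0 // -t0 -ov_sum // mulr_sumr.
apply: ler_sum => k _; rewrite ler_wpM2r ?ov_ge0 //.
by case/andP: (he k).
Qed.

Lemma Wn_0 (R : realFieldType) (t e : nat -> R) (N : nat) (a : R) :
  Wn t e N a a = 0.
Proof. by rewrite /Wn big1 // => k _; rewrite ov_empty mulr0. Qed.

Lemma Wn_ext (R : realFieldType) (t e : nat -> R) (N M : nat) (a b : R) :
  (forall k, t k < t k.+1) -> b <= t N -> (N <= M)%N -> Wn t e M a b = Wn t e N a b.
Proof.
move=> ht hb; elim: M => [|M IH].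
  by rewrite leqn0 => /eqP ->.
rewrite leq_eqVlt => /orP [/eqP -> //| hNM].
rewrite /Wn big_ord_recr /= -/(Wn t e M a b) IH // ov_zero ?mulr0 ?addr0 //.
apply: le_trans hb _; exact: t_mono.
Qed.

Lemma work_Wn (R : realFieldType) (t e : nat -> R) (N : nat) (a b w : R) :
  (forall k, t k < t k.+1) -> work_on t e a b w -> b <= t N -> w = Wn t e N a b.
Proof.
move=> ht [N' [hN' ->]] hN.
rewrite -/(Wn t e N' a b) -(Wn_ext e a ht hN' (leq_maxl N' N)).
by rewrite (Wn_ext e a ht hN (leq_maxr N' N)).
Qed.

Lemma exmax (R : realFieldType) (I : eqType) (f : I -> R) (s : seq I) :
  s != [::] -> exists2 x, x \in s & forall y, y \in s -> f y <= f x.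
Proof.
elim: s => [//|a s IH] _.
case: (eqVneq s [::]) => [->|/IH [x xs hx]].
  by exists a; rewrite ?mem_head // => y; rewrite inE => /eqP ->.
case: (leP (f a) (f x)) => hax.
  exists x; first by rewrite inE xs orbT.
  by move=> y; rewrite inE => /orP [/eqP -> //|/hx].
exists a; first exact: mem_head.
move=> y; rewrite inE => /orP [/eqP -> //|/hx hy].
by apply: le_trans hy (ltW hax).
Qed.

Lemma opt_machine (R : realFieldType) (m n : nat) (W : 'I_m -> R -> R -> R)
  (i : 'I_m) (Q : pred 'I_n) (S' C' : 'I_n -> R) :
  (forall a b c, a <= b -> b <= c -> W i a b + W i b c = W i a c) ->
  (forall a b, 0 <= W i a b) ->
  (forall a, W i a a = 0) ->
  (forall j, Q j -> 0 < W i (S' j) (C' j)) ->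
  (forall j, Q j -> 0 <= S' j /\ S' j <= C' j) ->
  (forall j j', Q j -> Q j' -> j != j' -> C' j <= S' j' \/ C' j' <= S' j) ->
  forall s, uniq s -> (forall j, j \in s -> Q j) ->
  forall T, (forall j, j \in s -> C' j <= T) ->
    \sum_(j <- s) W i (S' j) (C' j) <= W i 0 T.
Proof.
move=> Wadd Wge0 W0 Wpos hSC hdis.
have Wmono : forall a b c, a <= b -> b <= c -> W i a b <= W i a c.
  by move=> a b c hab hbc; rewrite -(Wadd _ _ _ hab hbc) lerDl.
move=> s; elim: {s}(size s) {-2}s (leqnn (size s)) => [|k IH] s.
  by rewrite leqn0 => /nilP -> _ _ T _; rewrite big_nil.
move=> hs us hQ T hT.
case: (eqVneq s [::]) => [->|sn]; first by rewrite big_nil.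
have [jm jms hjm] := exmax S' sn.
have Qjm := hQ _ jms.
have hlt : S' jm < C' jm.
  rewrite lt_neqAle; case: (hSC jm Qjm) => _ ->; rewrite andbT.
  apply/negP => /eqP he; move: (Wpos jm Qjm); by rewrite he W0 ltxx.
rewrite (big_rem jm) //=.
have hQr : forall j, j \in rem jm s -> Q j.
  by move=> j; rewrite mem_rem_uniq // inE => /andP [_ /hQ].
have hr : forall j, j \in rem jm s -> C' j <= S' jm.
  move=> j jr; have := jr; rewrite mem_rem_uniq // inE => /andP [hne js].
  case: (hdis _ _ (hQ _ js) Qjm hne) => // h.
  have := hjm _ js; lra.
have := IH (rem jm s) _ (rem_uniq jm us) hQr (S' jm) hr.
have hsz : (size (rem jm s) <= k)%N.
  by rewrite size_rem // -ltnS (leq_trans _ hs) // prednK // lt0n size_eq0.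
move=> /(_ hsz) h1.
have h0 : 0 <= S' jm by case: (hSC jm Qjm).
rewrite -(Wadd 0 (S' jm) T h0); last by apply: le_trans (hT _ jms); exact: ltW.
rewrite addrC lerD // Wmono //; [exact: ltW | exact: hT].
Qed.

Lemma avail_ge0 (R : realFieldType) (m n : nat) (asg : 'I_n -> 'I_m) (C : 'I_n -> R) s i :
  0 <= avail asg C s i.
Proof.
rewrite /avail; elim: s => [|a s IH]; rewrite ?big_nil ?big_cons //.
by case: ifP => // _; rewrite le_max IH orbT.
Qed.

Lemma avail_rcons (R : realFieldType) (m n : nat) (asg : 'I_n -> 'I_m) (C : 'I_n -> R) s x i :
  avail asg C (rcons s x) i = Num.max (avail asg C s i) (if asg x == i then C x else 0).
Proof.
rewrite /avail; elim: s => [|a s IH] /=.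
  rewrite big_cons !big_nil; case: ifP => _; [exact: maxC | by rewrite maxxx].
rewrite !big_cons IH; case: ifP => _ //; by rewrite maxA.
Qed.

Lemma ls_prefix (R : realFieldType) (m n : nat) (W : 'I_m -> R -> R -> R)
  (p : 'I_n -> R) (L : seq 'I_n) (asg : 'I_n -> 'I_m) (S C : 'I_n -> R) :
  (forall i a b c, a <= b -> b <= c -> W i a b + W i b c = W i a c) ->
  (forall i, W i 0 0 = 0) ->
  uniq L ->
  (forall j, p j = W (asg j) (S j) (C j)) ->
  (forall j, S j = avail asg C (take (index j L) L) (asg j) /\ S j <= C j) ->
  forall s s2, L = s ++ s2 -> forall i,
    W i 0 (avail asg C s i) <= \sum_(j <- s | asg j == i) p j.
Proof.
move=> Wadd W0 uL hp hLS s; elim/last_ind: s => [|s x IH] s2 hL i.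
  by rewrite /avail !big_nil W0.
rewrite cat_rcons in hL.
have {}IH := IH _ hL.
have xs : x \notin s.
  by move: uL; rewrite hL cat_uniq => /and3P [_ /hasPn /(_ x (mem_head _ _)) ->].
have hidx : take (index x L) L = s.
  by rewrite hL index_cat (negbTE xs) /= eqxx addn0 take_size_cat.
have [hS hSC] := hLS x; rewrite hidx in hS.
rewrite avail_rcons big_rcons /=.
case: eqP => [hi|_]; last first.
  rewrite addr0 (_ : Num.max _ 0 = avail asg C s i) ?IH //.
  by apply/max_idPl; exact: avail_ge0.
rewrite -hi in IH *.
rewrite (_ : Num.max _ (C x) = C x); last by apply/max_idPr; rewrite -hS.
rewrite -(Wadd _ 0 (S x) (C x)) //; last by rewrite hS avail_ge0.
by rewrite lerD // ?hp // hS IH.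
Qed.

Unset Implicit Arguments. Set Strict Implicit.

Lemma le_mk (R : realFieldType) (n : nat) (F : 'I_n -> R) j : F j <= makespan F.
Proof.
rewrite /makespan; have : j \in index_enum 'I_n by rewrite mem_index_enum.
elim: (index_enum 'I_n) => [//|a s IH]; rewrite big_cons inE => /orP [/eqP <-|/IH h].
  by rewrite le_max lexx.
by rewrite le_max h orbT.
Qed.

Lemma mk_ge0 (R : realFieldType) (n : nat) (F : 'I_n -> R) : 0 <= makespan F.
Proof.
rewrite /makespan; elim: (index_enum 'I_n) => [|a s IH]; rewrite ?big_nil ?big_cons //.
by rewrite le_max IH orbT.
Qed.

Lemma mk_le (R : realFieldType) (n : nat) (F : 'I_n -> R) X :
  0 <= X -> (forall j, F j <= X) -> makespan F <= X.
Proof.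
move=> hX hF; rewrite /makespan; elim/big_ind: _ => // x y hx hy.
by rewrite ge_max hx hy.
Qed.

Theorem theorem2 (R : realFieldType) (m n : nat) (e0 : R)
    (t e : 'I_m -> nat -> R) (p : 'I_n -> R) :
  0 < e0 -> e0 <= 1 ->
  (forall i, valid_profile e0 (t i) (e i)) ->
  (forall j, 0 < p j) ->
  forall (L : seq 'I_n) (asg : 'I_n -> 'I_m) (S C : 'I_n -> R),
    list_schedule t e p L asg S C ->
    forall (asg' : 'I_n -> 'I_m) (S' C' : 'I_n -> R),
      feasible t e p asg' S' C' ->
      makespan C <= (1 + e0^-1) * makespan C'.
Proof.
move=> he0 he1 hv hp L asg S C [hperm hLS] asg' S' C' [hF hdis].
set Cs := makespan C'.
have Cs0 : 0 <= Cs by apply: mk_ge0.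
pose B := Num.max (makespan C) Cs.
have hB : forall i, exists k, B <= t i k by move=> i; case: (hv i) => _ _ h _.
pose N i := xchoose (hB i).
have hN : forall i, B <= t i (N i) by move=> i; exact: (xchooseP (hB i)).
pose W i a b := Wn (t i) (e i) (N i) a b.
have ht : forall i k, t i k < t i k.+1 by move=> i; case: (hv i).
have Wadd : forall i a b c, a <= b -> b <= c -> W i a b + W i b c = W i a c.
  by move=> i a b c hab hbc; apply: Wn_add.
have Wge0 : forall i a b, 0 <= W i a b.
  by move=> i a b; apply: (@Wn_ge0 _ e0) => //; [exact: ltW | case: (hv i)].
have W0 : forall i a, W i a a = 0 by move=> i a; apply: Wn_0.
have Wmono : forall i a b c, a <= b -> b <= c -> W i a b <= W i a c.
  by move=> i a b c hab hbc; rewrite -(Wadd _ _ _ _ hab hbc) lerDl.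
have CB : forall j, C j <= B by move=> j; rewrite le_max le_mk.
have CB' : forall j, C' j <= B by move=> j; rewrite le_max le_mk orbT.
have hLS' : forall j, S j = avail asg C (take (index j L) L) (asg j) /\ S j <= C j.
  by move=> j; have [h1 h2 h3 h4] := hLS j.
have hpW : forall j, p j = W (asg j) (S j) (C j).
  move=> j; have [h1 h2 h3 h4] := hLS j.
  by apply: work_Wn h4 _ => //; apply: le_trans (hN _).
have hpW' : forall j, p j = W (asg' j) (S' j) (C' j).
  move=> j; have [h1 [h2 h3]] := hF j.
  by apply: work_Wn h3 _ => //; apply: le_trans (hN _).
have uL : uniq L by rewrite (perm_uniq hperm) enum_uniq.
have hopt : \sum_j p j <= \sum_i W i 0 Cs.
  rewrite (partition_big asg' xpredT) //=; apply: ler_sum => i _.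
  rewrite -big_filter big_seq.
  rewrite (eq_bigr (fun j => W i (S' j) (C' j))); last first.
    by move=> j; rewrite mem_filter => /andP [/eqP <- _]; exact: hpW'.
  rewrite -big_seq.
  apply: (@opt_machine _ _ _ W i (fun j => asg' j == i)) => //. all: try (move=> *; exact: Wadd). all: try (move=> *; exact: Wge0). all: try (move=> *; exact: W0).
  - by move=> j hj; rewrite -(eqP hj) -hpW'.
  - by move=> j _; case: (hF j) => h1 [h2 _].
  - by move=> j j' h1 h2 hne; apply: hdis; rewrite // (eqP h1) (eqP h2).
  - by rewrite filter_uniq // index_enum_uniq.
  - by move=> j; rewrite mem_filter => /andP [].
  - by move=> j _; apply: le_mk.
have hSj : forall j, S j <= Cs.
  move=> j; set prev := take (index j L) L.
  have jL : j \in L by rewrite (perm_mem hperm) mem_enum.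
  have jnp : j \notin prev.
    have jd : j \in drop (index j L) L.
      by rewrite (drop_nth j) ?index_mem // nth_index // mem_head.
    have := uL; rewrite -{1}(cat_take_drop (index j L) L) cat_uniq => /and3P [_ hh _].
    by move/hasPn: hh => /(_ j jd).
  have hpref := @ls_prefix R m n W p L asg S C Wadd (fun i => W0 i 0) uL hpW hLS' prev
     (drop (index j L) L) (esym (cat_take_drop _ _)).
  have hprev : \sum_(j' <- prev) p j' <= \sum_(j' | j' != j) p j'.
    rewrite big_uniq ?take_uniq // big_mkcond [X in _ <= X]big_mkcond.
    apply: ler_sum => j' _; case: ifP => hj'.
      rewrite ifT //; apply/negP => /eqP ej; move: jnp; by rewrite -ej hj'.
    by case: ifP => _ //; exact: ltW.
  have htot : \sum_(j' | j' != j) p j' < \sum_j' p j'.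
    by rewrite [X in _ < X](bigD1 j) //= ltrDr.
  case: (leP (S j) Cs) => // hlt; exfalso.
  have : \sum_i W i 0 Cs <= \sum_(j' <- prev) p j'.
    rewrite (partition_big asg xpredT) //=; apply: ler_sum => i _.
    apply: le_trans (hpref i); apply: Wmono => //.
    apply: le_trans (ltW hlt) _; have [h1 h2 h3 h4] := hLS j; by rewrite h2.
  move=> h; have := le_lt_trans (le_trans h hprev) htot.
  by move/(le_lt_trans hopt); rewrite ltxx.
have hX : 0 <= (1 + e0^-1) * Cs.
  by apply: mulr_ge0 => //; apply: addr_ge0 => //; rewrite invr_ge0 ltW.
apply: mk_le => // j.
have [h1 h2 h3 h4] := hLS j.
have S0 : 0 <= S j by rewrite h2 avail_ge0.
have hlo : e0 * (C j - S j) <= p j.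
  by rewrite hpW; apply: Wn_ge => //; apply: le_trans (hN _).
have hhi : p j <= Cs.
  have [g1 [g2 g3]] := hF j.
  have hb : C' j <= t (asg' j) (N (asg' j)) by exact: le_trans (CB' j) (hN _).
  rewrite hpW'; apply: le_trans (Wn_le (hv (asg' j)) g1 g2 hb) _.
  have := @le_mk _ _ C' j; rewrite -/Cs; lra.
have hd : C j - S j <= e0^-1 * Cs.
  rewrite -(ler_pM2l he0) mulrA mulfV ?mul1r ?gt_eqF //.
  exact: le_trans hlo hhi.
have hs := hSj j; rewrite mulrDl mul1r; lra.
Qed.
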